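(* Let the polynomials $H_m(z)$ be defined by the generating function \[ \sum_{m=0}^{\infty}H_m(z)t^m=\frac{1}{1+t^2+zt^3}. \] Then for every $m$ the zeros of $H_m(z)$ are real, and the set $\bigcup_{m=0}^{\infty}\mathcal{Z}(H_m)$ is dense in $(-\infty,\infty)$.
   Context: $\mathcal{Z}(H_m)$ denotes the set of zeros of $H_m(z)$. Convention: the zeros of the constant zero polynomial are considered real. *)

(* Defs.v *)
From mathcomp Require Import all_boot all_order all_algebra all_field.
From mathcomp Require Import reals.
Set Implicit Arguments. Unset Strict Implicit. Unset Printing Implicit Defensive.
Import Order.TTheory GRing.Theory Num.Theory.
Local Open Scope ring_scope.

(* Coefficient of t^i in 1 + t^2 + z t^3, as a polynomial in z (z = 'X). *)
Definition gdenom_coef (i : nat) : {poly int} :=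
  if i == 0%N then 1 else if i == 2%N then 1 else if i == 3%N then 'X else 0.

(* H : nat -> {poly int} satisfies  sum_m H_m t^m = 1/(1+t^2+z t^3)  as a formal
   power series in t, i.e. (1+t^2+z t^3) * sum_m H_m t^m = 1, coefficientwise. *)
Definition is_Hgen (H : nat -> {poly int}) : Prop :=
  forall n : nat,
    \sum_(i < n.+1) gdenom_coef i * H (n - i)%N = (n == 0%N)%:R.

(* Z(p) consists of real numbers; convention: zeros of the zero polynomial are real. *)
Definition zeros_real (p : {poly int}) : Prop :=
  p = 0 \/ forall z : algC, root (map_poly intr p) z -> z \is Num.real.

(* Main.v *)
Require Import Defs.
From mathcomp Require Import all_boot all_order all_algebra all_field.
From mathcomp Require Import reals.
From mathcomp Require Import trigo polyrcf.
From mathcomp Require Import ring lra zify.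
Import Order.TTheory GRing.Theory Num.Theory.
Local Open Scope ring_scope.

Section Rec.
Variable H : nat -> {poly int}.
Hypothesis hH : is_Hgen H.

Lemma H0 : H 0 = 1.
Proof.
have := hH 0; rewrite big_ord_recl big_ord0 /= addr0 /gdenom_coef /=.
by rewrite mul1r.
Qed.

Lemma H1 : H 1 = 0.
Proof.
have := hH 1; rewrite !big_ord_recl big_ord0 /= addr0 /gdenom_coef /=.
by rewrite mul1r mul0r addr0.
Qed.

Lemma H2 : H 2 = -1.
Proof.
have := hH 2; rewrite !big_ord_recl big_ord0 /= addr0 /gdenom_coef /=.
rewrite mul1r mul0r add0r mul1r H0 => /eqP; rewrite addr_eq0 => /eqP //.
Qed.

Lemma H3 k : H k.+3 = - H k.+1 - 'X * H k.
Proof.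
have := hH k.+3; rewrite !big_ord_recl /=.
rewrite big1 => [|i _]; last by rewrite /gdenom_coef /= mul0r.
rewrite /gdenom_coef /= !subSS !subn0 mul1r mul0r add0r mul1r addr0.
by move=> /eqP; rewrite addr_eq0 opprD => /eqP.

Qed.

Lemma H_parity m i : odd (m + i) -> (H m)`_i = 0.
Proof.
elim/ltn_ind: m i => m IH i.
case: m IH => [|[|[|k]]] IH.
- by rewrite H0 coef1; case: i.
- by rewrite H1 coef0.
- by rewrite H2 coefN coef1; case: i => //= i; rewrite oppr0.
- move=> hodd; rewrite H3 coefB coefXM coefN.
  rewrite (IH k.+1) //; last by move: hodd; rewrite !addSn /= negbK.
  case: i hodd => [|i] hodd /=; first by rewrite ?oppr0 ?subr0 ?sub0r ?oppr0.
  rewrite (IH k) ?oppr0 ?subr0 //.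
  lia. by move: hodd; rewrite !addSn !addnS /= !negbK.
Qed.

Lemma arith1 k a b c : (3 * a <= k.+1 + 3 -> 3 * b <= k + 3 -> c <= b.+1 ->
  3 * maxn a c <= k.+3 + 3)%N.
Proof. lia. Qed.

Lemma H_size m : (3 * size (H m) <= m + 3)%N.
Proof.
elim/ltn_ind: m => m IH.
case: m IH => [|[|[|k]]] IH.
- by rewrite H0 size_poly1.
- by rewrite H1 size_poly0.
- by rewrite H2 size_polyN size_poly1.
- rewrite H3.
  have h1 := IH k.+1 (ltnW (ltnSn _)).
  have h2 := IH k (ltnW (ltnW (ltnSn _))).
  have hs := size_polyD (- H k.+1) (- ('X * H k)); rewrite !size_polyN in hs.
  have hx : (size ('X * H k)%R <= (size (H k)).+1)%N.
    have [->|nz] := eqVneq (H k) 0; first by rewrite mulr0 size_poly0.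
    by rewrite mulrC size_mulX.
  apply: (leq_trans (leq_mul (leqnn 3) hs)).
  exact: arith1 h1 h2 hx.
Qed.

End Rec.

Lemma rec_uniq (F : pzRingType) (z : F) (a b : nat -> F) :
  a 0%N = b 0%N -> a 1%N = b 1%N -> a 2%N = b 2%N ->
  (forall k, a k.+3 = - a k.+1 - z * a k) ->
  (forall k, b k.+3 = - b k.+1 - z * b k) -> forall m, a m = b m.
Proof.
move=> e0 e1 e2 ra rb m; elim/ltn_ind: m => m IH.
case: m IH => [|[|[|k]]] IH //.
have h1 : (k.+1 < k.+3)%N by lia.
have h2 : (k < k.+3)%N by lia.
by rewrite ra rb (IH _ h1) (IH _ h2).

Qed.

Section Eval.
Variable H : nat -> {poly int}.
Hypothesis hH : is_Hgen H.
Variable F : comNzRingType.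
Variable z : F.
Definition hv m := (map_poly intr (H m) : {poly F}).[z].

Lemma hv0 : hv 0 = 1.
Proof. by rewrite /hv (H0 _ hH) rmorph1 hornerC. Qed.
Lemma hv1 : hv 1 = 0.
Proof. by rewrite /hv (H1 _ hH) rmorph0 hornerC. Qed.
Lemma hv2 : hv 2 = -1.
Proof. by rewrite /hv (H2 _ hH) rmorphN rmorph1 hornerN hornerC. Qed.
Lemma hv3 k : hv k.+3 = - hv k.+1 - z * hv k.
Proof.
rewrite /hv (H3 _ hH) rmorphB rmorphN rmorphM /= map_polyX.
by rewrite hornerD hornerN hornerN hornerM hornerX mulrC.
Qed.

Lemma key_identity (r rho2 s : F) (V : nat -> F) :
  rho2 = 1 + r ^+ 2 -> z = - r * rho2 -> V 0%N = s -> V 1%N = - r * s ->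
  (forall k, V k.+2 = - r * V k.+1 - rho2 * V k) ->
  forall m, (rho2 + 2 * r ^+ 2) * s * hv m = rho2 * V m - r * V m.+1 + r ^+ m.+2 * s.
Proof.
move=> hrho hz v0 v1 vr.
have V3 k : V k.+3 = - V k.+1 - z * V k.
  rewrite vr vr hz hrho; ring.
apply: (@rec_uniq _ z).
- rewrite hv0 ?vr ?v1 ?v0 hrho; ring.
- rewrite hv1 ?vr ?v1 ?v0 hrho; ring.
- rewrite hv2 ?vr ?v1 ?v0 hrho; ring.
- by move=> k; rewrite hv3; ring.
- move=> k; rewrite !V3 !exprS hz hrho; ring.
Qed.
End Eval.

Section Trig.
Variable R : realType.

Definition rhof (y : R) := Num.sqrt ((1 - 4 * y ^+ 2)^-1).
Definition zf (y : R) := 2 * y * rhof y ^+ 3.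
Definition phi (m j : nat) : R := pi *+ j / (m.+2)%:R.

Lemma sin_pin j : sin (pi *+ j) = 0 :> R.
Proof. by elim: j => [|j IH]; rewrite ?mulr0n ?sin0 // mulrSr sinDpi IH oppr0. Qed.

Lemma cos_pin j : cos (pi *+ j) = (-1) ^+ j :> R.
Proof. by elim: j => [|j IH]; rewrite ?mulr0n ?cos0 // mulrSr cosDpi IH exprS mulN1r. Qed.

Lemma rhof_prop (y : R) : `|2 * y| < 1 ->
  0 < rhof y /\ rhof y ^+ 2 * (1 - 4 * y ^+ 2) = 1.
Proof.
move=> hy.
have hp : 0 < 1 - 4 * y ^+ 2.
  have ha : `|2 * y| ^+ 2 = (2 * y) ^+ 2 := real_normK (num_real _).
  have h0 := normr_ge0 (2 * y).
  move: ha h0 hy; rewrite !expr2; nra.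
split; first by rewrite /rhof sqrtr_gt0 invr_gt0.
by rewrite /rhof sqr_sqrtr ?invr_ge0 ?ltW // mulVf // gt_eqF.
Qed.

Variable H : nat -> {poly int}.
Hypothesis hH : is_Hgen H.

Lemma sign_lemma (m j : nat) : 0 < phi m j < pi -> `|2 * cos (phi m j)| < 1 ->
  0 < (-1) ^+ j.+1 * @hv H R (zf (cos (phi m j))) m.
Proof.
set f := phi m j; set y := cos f => /andP[f0 fpi] hy.
have s0 : 0 < sin f by apply: sin_gt0_pi; rewrite f0 fpi.
have [rho0 rhoE] := rhof_prop _ hy.
set rho := rhof y in rho0 rhoE.
set r := - 2 * rho * y.
pose V k := rho ^+ k * sin (f *+ k.+1).
have hrho : rho ^+ 2 = 1 + r ^+ 2.
  apply/eqP; rewrite -subr_eq0.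
  have -> : rho ^+ 2 - (1 + r ^+ 2) = rho ^+ 2 * (1 - 4 * y ^+ 2) - 1 by rewrite /r; ring.
  by rewrite rhoE subrr.
have hz : zf y = - r * rho ^+ 2 by rewrite /zf /r -/rho; ring.
have v0 : V 0%N = sin f by rewrite /V expr0 mul1r mulr1n.
have v1 : V 1%N = - r * sin f by rewrite /V expr1 sin_mulr2n /r -/y; ring.
have vr k : V k.+2 = - r * V k.+1 - rho ^+ 2 * V k.
  rewrite /V.
  have e1 : f *+ k.+3 = f *+ k.+2 + f by rewrite mulrSr.
  have e2 : f *+ k.+1 = f *+ k.+2 - f by rewrite [f *+ k.+2]mulrSr addrK.
  rewrite e1 e2 sinD sinB /r -/y !exprS; ring.
have := @key_identity H hH R (zf y) r (rho ^+ 2) (sin f) V hrho hz v0 v1 vr m.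
have fN : f *+ m.+2 = pi *+ j.
  by rewrite /f /phi -[LHS]mulr_natr divfK // pnatr_eq0.
have vm1 : V m.+1 = 0 by rewrite /V fN sin_pin mulr0.
have vm : V m = - (-1) ^+ j * rho ^+ m * sin f.
  have e2 : f *+ m.+1 = pi *+ j - f by rewrite -fN [f *+ m.+2]mulrSr addrK.
  rewrite /V e2 sinB sin_pin cos_pin; ring.
rewrite vm1 vm => hk.
have pos : 0 < (rho ^+ 2 + 2 * r ^+ 2) * sin f.
  by apply: mulr_gt0 => //; apply: ltr_pwDl; rewrite ?exprn_gt0 // mulr_ge0 // sqr_ge0.
rewrite -(pmulr_rgt0 _ pos).
have -> : (rho ^+ 2 + 2 * r ^+ 2) * sin f * ((-1) ^+ j.+1 * @hv H R (zf y) m)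
   = (-1) ^+ j.+1 * ((rho ^+ 2 + 2 * r ^+ 2) * sin f * @hv H R (zf y) m) by ring.
rewrite hk.
have hr : `|r| < rho.
  have -> : r = - (rho * (2 * y)) by rewrite /r; ring.
  by rewrite normrN normrM (gtr0_norm rho0) gtr_pMr.
have hlt : `|(-1) ^+ j * r ^+ m.+2| < rho ^+ m.+2.
  by rewrite normrM normrX normrN1 expr1n mul1r normrX ltrXn2r.
have -> : (-1) ^+ j.+1 * (rho ^+ 2 * (- (-1) ^+ j * rho ^+ m * sin f) - r * 0 + r ^+ m.+2 * sin f)
   = sin f * (((-1) ^+ j) ^+ 2 * rho ^+ m.+2 - (-1) ^+ j * r ^+ m.+2).
  rewrite !exprS; ring.
have -> : ((-1) ^+ j) ^+ 2 = 1 :> R.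
  by rewrite -exprM mulnC exprM expr2 mulrNN mulr1 expr1n.
rewrite mul1r.
apply: mulr_gt0 => //; rewrite subr_gt0.
exact: le_lt_trans (ler_norm _) hlt.
Qed.

End Trig.
Arguments phi {R} m j.
Arguments rhof {R} y.
Arguments zf {R} y.
Arguments rhof_prop {R y}.

Section Geo.
Variable R : realType.

Lemma cos_pi3 : cos (pi / 3) = 1 / 2 :> R.
Proof.
set a := pi / 3 : R.
have e : pi = a *+ 3 by rewrite /a -[RHS]mulr_natr divfK // pnatr_eq0.
have c3 : cos (a *+ 3) = 4 * cos a ^+ 3 - 3 * cos a.
  rewrite mulrSr cosD cos_mulr2n sin_mulr2n.
  have := sin2cos2 a; rewrite !expr2 => hs.
  have -> : (cos a * sin a) *+ 2 * sin a = 2 * cos a * (sin a * sin a) by rewrite mulr2n; ring.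
  rewrite hs; rewrite !exprS expr0 mulr2n; ring.
have cpos : 0 < cos a.
  apply: cos_gt0_pihalf; have := pi_gt0 R; rewrite /a => p0; apply/andP; split; lra.
rewrite -e cospi in c3.
have : (cos a + 1) * (2 * cos a - 1) ^+ 2 = 0.
  have -> : (cos a + 1) * (2 * cos a - 1) ^+ 2 = 4 * cos a ^+ 3 - 3 * cos a + 1.
    by rewrite !exprS expr0; ring.
  by rewrite -c3 addNr.
move/eqP; rewrite mulf_eq0 => /orP[|]; first by move/eqP; lra.
rewrite expf_eq0 /= => /eqP; lra.
Qed.

Lemma cos_2pi3 : cos (pi / 3 *+ 2) = - (1 / 2) :> R.
Proof.
have -> : pi / 3 *+ 2 = pi - pi / 3 :> R.
  by rewrite mulr2n; lra.
by rewrite cosB cospi sinpi cos_pi3; ring.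
Qed.

Lemma cos_third (f : R) : pi / 3 < f < pi / 3 *+ 2 -> `|2 * cos f| < 1.
Proof.
move=> /andP[h1 h2].
have p0 := pi_gt0 R.
have i1 : (pi / 3 : R) \in `[0, pi] by rewrite in_itv /=; apply/andP; split; lra.
have i2 : (pi / 3 *+ 2 : R) \in `[0, pi] by rewrite in_itv /= mulr2n; apply/andP; split; lra.
have i3 : f \in `[0, pi] by rewrite in_itv /=; rewrite mulr2n in h2; apply/andP; split; lra.
have c1 : cos f < 1 / 2 by rewrite -cos_pi3 ltr_cos.
have c2 : - (1 / 2) < cos f by rewrite -cos_2pi3 ltr_cos.
rewrite ltr_norml; apply/andP; split; lra.
Qed.

Lemma phi_gt (m j : nat) : (m.+2 < 3 * j)%N -> pi / 3 < phi m j :> R.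
Proof.
move=> h; rewrite /phi -[pi *+ j]mulr_natr -mulrA.
set t := j%:R / (m.+2)%:R : R.
have N0 : 0 < (m.+2)%:R :> R by rewrite ltr0n.
have tN : t * (m.+2)%:R = j%:R by rewrite /t divfK // pnatr_eq0.
have hj : (m.+2)%:R < 3 * j%:R :> R by rewrite -natrM ltr_nat.
have p0 := pi_gt0 R.
have : 1 < 3 * t by nra.
nra.
Qed.

Lemma phi_lt (m j : nat) : (3 * j < 2 * m.+2)%N -> phi m j < pi / 3 *+ 2 :> R.
Proof.
move=> h; rewrite /phi -[pi *+ j]mulr_natr -mulrA.
set t := j%:R / (m.+2)%:R : R.
have N0 : 0 < (m.+2)%:R :> R by rewrite ltr0n.
have tN : t * (m.+2)%:R = j%:R by rewrite /t divfK // pnatr_eq0.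
have hj : 3 * j%:R < 2 * (m.+2)%:R :> R by rewrite -!natrM ltr_nat.
have p0 := pi_gt0 R.
have : 3 * t < 2 by nra.
rewrite mulr2n; nra.
Qed.

Lemma phi_S (m j : nat) : phi m j.+1 = phi m j + pi / (m.+2)%:R :> R.
Proof. by rewrite /phi mulrSr mulrDl. Qed.

Lemma rhofN (y : R) : rhof (- y) = rhof y.
Proof. by rewrite /rhof sqrrN. Qed.

Lemma zfN (y : R) : zf (- y) = - zf y.
Proof. by rewrite /zf rhofN; ring. Qed.

Lemma zf0 : zf 0 = 0 :> R.
Proof. by rewrite /zf mulr0 mul0r. Qed.

Lemma zf_inc_pos (a b : R) : 0 <= a -> a < b -> `|2 * b| < 1 -> zf a < zf b.
Proof.
move=> a0 ab hb.
have ha : `|2 * a| < 1.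
  have b0 : 0 <= b by apply: ltW (le_lt_trans a0 ab).
  rewrite (ger0_norm (mulr_ge0 _ a0)) //; rewrite (ger0_norm (mulr_ge0 _ b0)) // in hb.
  lra.
have [ra ea] := rhof_prop ha.
have [rb eb] := rhof_prop hb.
have pa : 0 < 1 - 4 * a ^+ 2 by rewrite -(pmulr_rgt0 _ (exprn_gt0 2 ra)) ea.
have pb : 0 < 1 - 4 * b ^+ 2 by rewrite -(pmulr_rgt0 _ (exprn_gt0 2 rb)) eb.
have rab : rhof a <= rhof b.
  rewrite /rhof ler_sqrt; last by rewrite invr_ge0 ltW.
  rewrite lef_pV2 ?posrE //.
  rewrite !expr2; nra.
rewrite /zf -!mulrA ltr_pM2l //.
have h3 : rhof a ^+ 3 <= rhof b ^+ 3.
  by apply: lerXn2r; rewrite // nnegrE ltW.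
apply: (le_lt_trans (ler_wpM2l a0 h3)).
by rewrite ltr_pM2r // exprn_gt0.
Qed.

Lemma zf_inc (a b : R) : `|2 * a| < 1 -> `|2 * b| < 1 -> a < b -> zf a < zf b.
Proof.
move=> ha hb ab.
have [a0|a0] := leP 0 a; first exact: zf_inc_pos.
have [b0|b0] := leP b 0.
  have := @zf_inc_pos (- b) (- a); rewrite !zfN !ltrN2; apply.
  - by rewrite oppr_ge0.
  - by [].
  - by rewrite mulrN normrN.
apply: (@lt_trans _ _ 0).
  have := @zf_inc_pos 0 (- a); rewrite zfN zf0 !oppr_gt0 lexx; apply => //.
  by rewrite mulrN normrN.
by have := @zf_inc_pos 0 b; rewrite zf0; apply.
Qed.

End Geo.
Arguments cos_third {R f}.
Arguments phi_gt {R m j}.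
Arguments phi_lt {R m j}.
Arguments phi_S {R}.
Arguments zf_inc {R a b}.
Arguments sign_lemma {R H} hH {m j}.

Lemma many_roots (F : rcfType) (p : {poly F}) (x : nat -> F) (e : nat) :
  (forall i, (i < e)%N -> x i.+1 < x i) ->
  (forall i, (i < e)%N -> p.[x i] * p.[x i.+1] < 0) ->
  exists rs : seq F, [/\ size rs = e, uniq rs, all (root p) rs & all (fun r => x e < r) rs].
Proof.
elim: e => [|e IH] hdec hsg; first by exists [::].
have [rs [s u ar ax]] := IH (fun i hi => hdec i (ltnW hi)) (fun i hi => hsg i (ltnW hi)).
have le : x e.+1 <= x e by apply: ltW; apply: hdec.
have hs : p.[x e.+1] * p.[x e] < 0 by rewrite mulrC; apply: hsg.
have [w] := poly_ivtoo le hs.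
rewrite in_itv /= => /andP[w1 w2] rw.
exists (w :: rs); split => /=.
- by rewrite s.
- rewrite u andbT; apply/negP => wrs.
  by move/allP: ax => /(_ w wrs); rewrite ltNge (ltW w2).
- by rewrite rw ar.
- rewrite w1 /=; apply/allP => r rrs.
  by move/allP: ax => /(_ r rrs); apply: lt_trans; apply: hdec.
Qed.

Lemma sign_close (R : realFieldType) (u v : R) : `|v - u| < `|u| -> 0 < v * u.
Proof.
have [u0|u0] := ltrP 0 u.
  rewrite (gtr0_norm u0) ltr_norml => /andP[h1 h2]; nra.
rewrite (ler0_norm u0) ltr_norml => /andP[h1 h2]; nra.
Qed.

Lemma point_approx {R : realType} (p : {poly R}) (x d : R) :
  p.[x] != 0 -> 0 < d -> exists q : rat, (`|ratr q - x| < d) && (0 < p.[ratr q] * p.[x]).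
Proof.
move=> px d0.
have [d1 d10 hd1] := poly_cont x p (ltac:(by rewrite normr_gt0) : 0 < `|p.[x]|).
set d2 := Num.min d d1.
have d20 : 0 < d2 by rewrite lt_min d0 d10.
have [q] := @rat_in_itvoo R (x - d2) (x + d2) ltac:(lra).
rewrite in_itv /= => /andP[q1 q2].
have hq : `|ratr q - x| < d2 by rewrite ltr_norml; apply/andP; split; lra.
exists q; apply/andP; split.
  by apply: lt_le_trans hq _; rewrite ge_min lexx.
apply: sign_close; apply: hd1; apply: lt_le_trans hq _.
by rewrite ge_min lexx orbT.
Qed.

Lemma min_pos (R : realFieldType) (f : nat -> R) (e : nat) :
  (forall i, (i < e)%N -> 0 < f i) -> exists2 d : R, 0 < d & forall i, (i < e)%N -> d <= f i.
Proof.
elim: e => [|e IH] hf; first by exists 1.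
have [d d0 hd] := IH (fun i hi => hf i (ltnW hi)).
exists (Num.min d (f e)); first by rewrite lt_min d0 hf.
move=> i; rewrite ltnS leq_eqVlt => /orP[/eqP ->|hi]; first by rewrite ge_min lexx orbT.
by rewrite ge_min hd.
Qed.

Lemma seq_approx (R : realType) (p : {poly R}) (x : nat -> R) (e : nat) :
  (forall i, (i < e)%N -> x i.+1 < x i) -> (forall i, (i <= e)%N -> p.[x i] != 0) ->
  exists q : nat -> rat, (forall i, (i < e)%N -> q i.+1 < q i) /\
     (forall i, (i <= e)%N -> 0 < p.[ratr (q i)] * p.[x i]).
Proof.
move=> hdec hnz.
have [d d0 hd] := @min_pos R (fun i => x i - x i.+1) e
  (fun i hi => ltac:(by rewrite subr_gt0; apply: hdec)).
have d20 : 0 < d / 2 by rewrite divr_gt0.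
have ex i : exists q : rat, (i <= e)%N ==> ((`|ratr q - x i| < d / 2) && (0 < p.[ratr q] * p.[x i])).
  have [ie|ie] := boolP (i <= e)%N; last by exists 0.
  have [q hq] := @point_approx _ p (x i) (d / 2) (hnz i ie) d20.
  by exists q.
pose q i := xchoose (ex i).
have qP i : (i <= e)%N -> (`|ratr (q i) - x i| < d / 2) && (0 < p.[ratr (q i)] * p.[x i]).
  by move=> ie; have := xchooseP (ex i); move/implyP; apply.
exists q; split; last by move=> i ie; case/andP: (qP i ie).
move=> i ie.
case/andP: (qP i (ltnW ie)) => h1 _.
case/andP: (qP i.+1 ie) => h2 _.
have := hd i ie.
move: h1 h2; rewrite !ltr_norml => /andP[h1 h1'] /andP[h2 h2'] h3.
rewrite -(ltr_rat R); lra.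
Qed.

From mathcomp Require Import Rstruct.

Lemma arith2 m e i : (3 * e.+1 <= m + 3)%N -> ((m + e) %% 2 = 0)%N -> (i <= e)%N ->
  (m.+2 < 3 * ((m.+2 %/ 3).+1 + i))%N /\ (3 * ((m.+2 %/ 3).+1 + i) < 2 * m.+2)%N.
Proof. lia. Qed.

Lemma horner_ratr_int (F : numFieldType) (P : {poly int}) (q : rat) :
  (map_poly intr P : {poly F}).[ratr q] = ratr ((map_poly intr P : {poly rat}).[q]).
Proof.
rewrite -horner_map /= -map_poly_comp; congr (_.[_]).
by apply: eq_map_poly => x /=; rewrite ratr_int.
Qed.

Lemma sign3 {F : realFieldType} {u1 u2 v1 v2 : F} :
  0 < u1 * v1 -> 0 < u2 * v2 -> v1 * v2 < 0 -> u1 * u2 < 0.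
Proof.
move=> h1 h2 h3.
have h4 : 0 < (u1 * v1) * (u2 * v2) by apply: mulr_gt0.
rewrite ltNge; apply/negP => h5.
have : (u1 * u2) * (v1 * v2) <= 0 by apply: mulr_ge0_le0 => //; apply: ltW.
have -> : (u1 * u2) * (v1 * v2) = (u1 * v1) * (u2 * v2) by ring.
by rewrite leNgt h4.
Qed.

Section Part1.
Variable H : nat -> {poly int}.
Hypothesis hH : is_Hgen H.

Lemma part1 m : zeros_real (H m).
Proof.
have [->|nz] := eqVneq (H m) 0; [by left|right].
set e := (size (H m)).-1.
have hsz : size (H m) = e.+1.
  by rewrite /e prednK // size_poly_gt0.
have hpar : ((m + e) %% 2 = 0)%N.
  have hodd : ~~ odd (m + e).
    apply/negP => /(@H_parity _ hH m e) h.
    have : lead_coef (H m) != 0 by rewrite lead_coef_eq0.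
    by rewrite lead_coefE hsz /= h eqxx.
  by rewrite modn2 (negbTE hodd).
have hs3 : (3 * e.+1 <= m + 3)%N by rewrite -hsz; apply: (@H_size _ hH m).
set a := (m.+2 %/ 3).+1.
pose R0 := Rdefinitions.R.
pose pR := (map_poly intr (H m) : {poly R0}).
pose x (i : nat) : R0 := zf (cos (phi m (a + i))).
have hphi i : (i <= e)%N -> (pi / 3 : R0) < phi m (a + i) < (pi / 3 *+ 2 : R0).
  move=> ie; have [h1 h2] := arith2 _ _ _ hs3 hpar ie.
  by rewrite phi_gt ?phi_lt.
have pi0 := pi_gt0 R0.
have hphi' i : (i <= e)%N -> (0 : R0) < phi m (a + i) < (pi : R0).
  by move=> /hphi /andP[h1 h2]; rewrite mulr2n in h2; apply/andP; split; lra.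
have hsg i : (i <= e)%N -> 0 < (-1) ^+ (a + i).+1 * pR.[x i].
  move=> ie; apply: (@sign_lemma R0 H hH m (a + i) (hphi' i ie)).
  by apply: cos_third; apply: hphi.
have hnz i : (i <= e)%N -> pR.[x i] != 0.
  by move=> /hsg; apply: contraTneq => ->; rewrite mulr0 ltxx.
have hdec i : (i < e)%N -> x i.+1 < x i.
  move=> ie.
  have h1 := hphi' i (ltnW ie); have h2 := hphi' i.+1 ie.
  apply: zf_inc; [exact: cos_third (hphi _ ie)|exact: cos_third (hphi _ (ltnW ie))|].
  rewrite ltr_cos ?in_itv /=.
  - rewrite addnS phi_S ltrDl divr_gt0 //.
  - by case/andP: h1 => h1 h1'; rewrite (ltW h1) (ltW h1').
  - by case/andP: h2 => h2 h2'; rewrite (ltW h2) (ltW h2').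
have hprod i : (i < e)%N -> pR.[x i] * pR.[x i.+1] < 0.
  move=> ie.
  have s1 := hsg i (ltnW ie); have s2 := hsg i.+1 ie.
  rewrite addnS exprS mulN1r mulNr oppr_gt0 in s2.
  set sg := (-1) ^+ (a + i).+1 in s1 s2.
  have sg2 : sg * sg = 1 :> R0 by rewrite /sg -expr2 -exprM mulnC exprM expr2 mulrNN mulr1 expr1n.
  have : (sg * pR.[x i]) * (sg * pR.[x i.+1]) < 0 by rewrite pmulr_rlt0.
  have -> : (sg * pR.[x i]) * (sg * pR.[x i.+1]) = (sg * sg) * (pR.[x i] * pR.[x i.+1]) by ring.
  by rewrite sg2 mul1r.
have [q [qdec qsg]] := @seq_approx R0 pR x e hdec hnz.
pose pQ := (map_poly intr (H m) : {poly rat}).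
have qprod i : (i < e)%N -> pQ.[q i] * pQ.[q i.+1] < 0.
  move=> ie.
  have := sign3 (qsg i (ltnW ie)) (qsg i.+1 ie) (hprod i ie).
  by rewrite /pR !horner_ratr_int -rmorphM ltrq0.
pose pA := (map_poly intr (H m) : {poly algR}).
pose xa (i : nat) : algR := ratr (q i).
have [rs [rsz rsu rsr _]] : exists rs : seq algR,
    [/\ size rs = e, uniq rs, all (root pA) rs & all (fun r => xa e < r) rs].
  apply: many_roots => i ie; first by rewrite /xa ltr_rat; apply: qdec.
  by rewrite /pA /xa !horner_ratr_int -rmorphM ltrq0; apply: qprod.
move=> z rz; apply: contraT => zn.
pose pC := (map_poly intr (H m) : {poly algC}).
have pCE : pC = map_poly algRval pA.
  rewrite /pC /pA -map_poly_comp; apply: eq_map_poly => c /=.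
  by rewrite rmorph_int.
have szC : size pC = e.+1 by rewrite /pC size_map_inj_poly ?hsz //; exact: intr_inj.
have pC0 : pC != 0 by rewrite -size_poly_gt0 szC.
have := @max_poly_roots _ pC (z :: map algRval rs) pC0.
rewrite /= szC size_map rsz ltnn rz /=.
have -> : all (root pC) (map algRval rs).
  apply/allP => w /mapP[r rr ->]; rewrite pCE fmorph_root.
  by move/allP: rsr; apply.
have hu : (z \notin map algRval rs) && uniq (map algRval rs).
  rewrite (map_inj_uniq val_inj) rsu andbT.
  apply/negP => /mapP[r _ zr]; move: zn; rewrite zr.
  by rewrite algRvalP.
by rewrite hu => /(_ isT isT).
Qed.
End Part1.

Lemma ysol {R : realType} (t : R) : exists y : R, `|2 * y| < 1 /\ zf y = t.
Proof.
pose p : {poly R} := 'X^3 + 'X + t%:P.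
have pE c : p.[c] = c ^+ 3 + c + t by rewrite /p !hornerE.
set b := `|t| + 1.
have b1 : 1 <= b by rewrite /b lerDr normr_ge0.
have tb : - b < t < b.
  have := lexx `|t|; rewrite {1}ler_norml /b => /andP[h1 h2].
  apply/andP; split; lra.
have b3 : 0 <= b ^+ 3 by rewrite exprn_ge0 // (le_trans ler01 b1).
have pb : 0 < p.[b] by rewrite pE; lra.
have pa : p.[- b] < 0 by rewrite pE exprNn; lra.
have ab : - b <= b by lra.
have hp : p.[- b] <= 0 <= p.[b] by rewrite !ltW.
have [r _ rr] := poly_ivt ab hp.
have r3 : r ^+ 3 + r + t = 0 by rewrite -pE; apply/eqP.
set S := Num.sqrt (1 + r ^+ 2).
have S2 : S ^+ 2 = 1 + r ^+ 2 by rewrite sqr_sqrtr // addr_ge0 // sqr_ge0.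
have S0 : 0 < S by rewrite sqrtr_gt0 ltr_wpDr // sqr_ge0.
have r2 : 0 <= r ^+ 2 := sqr_ge0 r.
set y := - r / (2 * S).
have e2y : 2 * y = - r / S by rewrite /y; field; rewrite gt_eqF.
have e2y2 : (2 * y) ^+ 2 * (1 + r ^+ 2) = r ^+ 2.
  by rewrite e2y -S2; field; rewrite gt_eqF.
exists y; split.
  have ha : `|2 * y| ^+ 2 = (2 * y) ^+ 2 := real_normK (num_real _).
  have h0 := normr_ge0 (2 * y).
  have : (2 * y) ^+ 2 < 1.
    move: e2y2; rewrite !expr2 => e; nra.
  move: ha h0; rewrite !expr2; nra.
have e4 : (1 - 4 * y ^+ 2)^-1 = S ^+ 2.
  have -> : 1 - 4 * y ^+ 2 = 1 - (2 * y) ^+ 2 by ring.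
  rewrite S2.
  have hne : 1 + r ^+ 2 != 0 by rewrite gt_eqF // ltr_wpDr.
  have -> : (2 * y) ^+ 2 = r ^+ 2 / (1 + r ^+ 2).
    by apply: (mulIf hne); rewrite e2y2 divfK.
  by rewrite -{1}(divff hne) -mulrBl addrK mul1r invrK.
rewrite /zf /rhof e4 sqrtr_sqr (gtr0_norm S0).
have -> : 2 * y * S ^+ 3 = (2 * y * S) * S ^+ 2 by ring.
have -> : 2 * y * S = - r by rewrite e2y divfK // gt_eqF.
rewrite S2; lra.
Qed.

Section Part2.
Variable H : nat -> {poly int}.
Hypothesis hH : is_Hgen H.

Lemma part2 (R : realType) (x eps : R) : 0 < eps ->
  exists (m : nat) (y : R), H m != 0 /\ root (map_poly intr (H m)) y /\ `|y - x| < eps.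
Proof.
move=> e0.
have [y1 [hy1 ey1]] := ysol (x - eps / 2).
have [y2 [hy2 ey2]] := ysol (x + eps / 2).
have y12 : y1 < y2.
  rewrite ltNge; apply/negP; rewrite le_eqVlt => /orP[/eqP e|h].
    by move: ey1 ey2; rewrite e => ->; lra.
  by have := zf_inc hy2 hy1 h; rewrite ey1 ey2; lra.
have b1 : -1 < 2 * y1 < 1 by rewrite -ltr_norml.
have b2 : -1 < 2 * y2 < 1 by rewrite -ltr_norml.
have iy1 : y1 \in `[-1, 1] by rewrite in_itv /=; apply/andP; split; lra.
have iy2 : y2 \in `[-1, 1] by rewrite in_itv /=; apply/andP; split; lra.
set f1 := acos y1; set f2 := acos y2.
have cf1 : cos f1 = y1 by rewrite /f1 acosK.
have cf2 : cos f2 = y2 by rewrite /f2 acosK.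
have f10 : 0 <= f1 by apply: acos_ge0; rewrite in_itv /= in iy1.
have f1pi : f1 <= pi by apply: acos_lepi; rewrite in_itv /= in iy1.
have f20 : 0 <= f2 by apply: acos_ge0; rewrite in_itv /= in iy2.
have f2pi : f2 <= pi by apply: acos_lepi; rewrite in_itv /= in iy2.
have inI (u : R) : 0 <= u -> u <= pi -> u \in `[0, pi] by move=> h h'; rewrite in_itv /= h h'.
have f21 : f2 < f1 by rewrite -ltr_cos ?inI // cf1 cf2.
set d := f1 - f2.
have d0 : 0 < d by rewrite /d subr_gt0.
have pi0 := pi_gt0 R.
set m := Num.truncn (2 * pi / d).
set N := (m.+2)%:R : R.
have hN : 2 * pi < d * N.
  have h := truncnS_gt (2 * pi / d).
  have : 2 * pi / d < N by apply: lt_trans h _; rewrite /N ltr_nat.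
  by rewrite ltr_pdivrMr // [d * N]mulrC.
have N0 : 0 < N by rewrite /N ltr0n.
set u := f2 * N / pi.
have u0 : 0 <= u by rewrite /u divr_ge0 ?mulr_ge0 ?(ltW N0) ?(ltW pi0).
have uE : u * pi = f2 * N by rewrite /u divfK // gt_eqF.
set k := Num.truncn u.
have /andP[k1 k2] := truncn_itv u0.
set j := k.+1.
have phiE n : phi m n = pi * n%:R / N by rewrite /phi -[pi *+ n]mulr_natr.
have hj1 : f2 < phi m j.
  rewrite phiE ltr_pdivlMr // /j.
  have : pi * u < pi * k.+1%:R by rewrite ltr_pM2l.
  rewrite mulrC uE; lra.
have hj2 : phi m j.+1 < f1.
  rewrite phiE ltr_pdivrMr // /j.
  have e : (pi : R) * (k.+2)%:R = pi * k%:R + 2 * pi by rewrite -[k.+2]addn2 natrD; ring.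
  rewrite e.
  have h : pi * k%:R <= pi * u by rewrite ler_pM2l.
  have h' : pi * u = f2 * N by rewrite mulrC uE.
  rewrite h' in h; rewrite /d mulrBl in hN; lra.
have hjj : (phi m j : R) < phi m j.+1 by rewrite phi_S ltrDl divr_gt0.
have p1 : 0 < (phi m j : R) < pi by apply/andP; split; lra.
have p2 : 0 < (phi m j.+1 : R) < pi by apply/andP; split; lra.
have i1 : (phi m j : R) \in `[0, pi] by apply: inI; lra.
have i2 : (phi m j.+1 : R) \in `[0, pi] by apply: inI; lra.
set yj : R := cos (phi m j); set yj1 : R := cos (phi m j.+1).
have if1 : f1 \in `[0, pi] by apply: inI.
have if2 : f2 \in `[0, pi] by apply: inI.
have c1 : y1 < yj1 by rewrite /yj1 -cf1 (ltr_cos i2 if1).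
have c2 : yj1 < yj by rewrite /yj1 /yj (ltr_cos i1 i2).
have c3 : yj < y2 by rewrite /yj -cf2 (ltr_cos if2 i1).
have hyj : `|2 * yj| < 1 by rewrite ltr_norml; apply/andP; split; lra.
have hyj1 : `|2 * yj1| < 1 by rewrite ltr_norml; apply/andP; split; lra.
have s1 := sign_lemma hH p1 hyj.
have s2 := sign_lemma hH p2 hyj1.
rewrite -/yj in s1; rewrite -/yj1 in s2.
pose p := (map_poly intr (H m) : {poly R}).
have z1 : zf yj1 < zf yj by apply: zf_inc.
have z2 : zf y1 < zf yj1 by apply: zf_inc.
have z3 : zf yj < zf y2 by apply: zf_inc.
have hprod : p.[zf yj1] * p.[zf yj] < 0.
  rewrite /hv -/p in s1 s2.
  rewrite exprS mulN1r mulNr oppr_gt0 in s2.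
  set sg := (-1) ^+ j.+1 in s1 s2.
  have sg2 : sg * sg = 1 :> R by rewrite /sg -expr2 -exprM mulnC exprM expr2 mulrNN mulr1 expr1n.
  have : (sg * p.[zf yj1]) * (sg * p.[zf yj]) < 0 by rewrite nmulr_rlt0.
  have -> : (sg * p.[zf yj1]) * (sg * p.[zf yj]) = (sg * sg) * (p.[zf yj1] * p.[zf yj]) by ring.
  by rewrite sg2 mul1r.
have [w] := poly_ivtoo (ltW z1) hprod.
rewrite in_itv /= => /andP[w1 w2] rw.
exists m, w; split; last split => //.
  apply/negP => /eqP hm0; move: s1; rewrite /hv hm0 rmorph0 horner0 mulr0 ltxx //.
rewrite ltr_norml; apply/andP; split; lra.
Qed.
End Part2.

Theorem theorem3p1 (H : nat -> {poly int}) (hH : is_Hgen H) :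
  (forall m : nat, zeros_real (H m)) /\
  (forall (R : realType) (x eps : R), 0 < eps ->
     exists (m : nat) (y : R),
       H m != 0 /\ root (map_poly intr (H m)) y /\ `|y - x| < eps).
Proof.
split; first by move=> m; exact: (@part1 H hH m).
by move=> R x eps e0; exact: (@part2 H hH R x eps e0).
Qed.
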